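(* Let $n,b$ be integers with $1<n<b$, and let $\Gamma_0$ be a strongly-connected edge-labelled subgraph of the $(n,b)$-Hoey-Sloane graph $\Gamma$. Then its reflection $\overline{\Gamma}_0$ is a strongly-connected edge-labelled subgraph of $\Gamma$.
   Context: Let $\lambda(x)$ denote the least non-negative residue of $x$ modulo $b$. The $(n,b)$-mother graph $M$ is the directed graph on vertex set $\{0,\ldots,b-1\}$ whose edges are the ordered pairs of digits $(d_1,d_2)$ with $\lambda(d_1+(b-n)d_2)\le n-1$. The $(n,b)$-Hoey-Sloane graph $\Gamma$ is the edge-labelled directed graph on states $\{0,\ldots,n-1\}$ in which $(c_1,c_2)$ is an edge precisely when $\{(d_1,d_2)\in E(M)\mid n d_2-d_1+c_1=b c_2\}$ is nonempty, this set being its label set. For a digit $d$ put $\overline d=b-1-d$, for a state $c$ put $\overline c=n-1-c$. The reflection $\overline{\Gamma}_0$ of an edge-labelled subgraph $\Gamma_0$ of $\Gamma$ has vertices $\overline{c}$ ($c$ a vertex of $\Gamma_0$), edges $(\overline{c}_1,\overline{c}_2)$ ($(c_1,c_2)$ an edge of $\Gamma_0$), and label $(\overline{d}_1,\overline{d}_2)$ on $(\overline{c}_1,\overline{c}_2)$ whenever $(d_1,d_2)$ labels $(c_1,c_2)$ in $\Gamma_0$. *)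

(* Defs.v *)
From mathcomp Require Import all_boot all_order all_algebra.
Set Implicit Arguments. Unset Strict Implicit. Unset Printing Implicit Defensive.
Import GRing.Theory.

(* Digits are elements of 'I_b, states are elements of 'I_n. *)

(* lambda(x) = x mod b; the mother-graph edge condition.
   Since 0 <= n < b, x = d1 + (b-n) d2 is a natural number. *)
Definition mother_edge (n b : nat) (d1 d2 : 'I_b) : bool :=
  ((d1 + (b - n) * d2) %% b <= n - 1)%N.

Definition hs_label (n b : nat) (c1 c2 : 'I_n) (d1 d2 : 'I_b) : bool :=
  @mother_edge n b d1 d2 &&
  ((n%:Z * d2%:Z - d1%:Z + c1%:Z)%R == (b%:Z * c2%:Z)%R).

Definition hs_edge (n b : nat) (c1 c2 : 'I_n) : bool :=
  [exists d1 : 'I_b, exists d2 : 'I_b, @hs_label n b c1 c2 d1 d2].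

Record elgraph (n b : nat) := ELGraph {
  vset : {set 'I_n};
  eset : rel 'I_n;
  lab  : 'I_n -> 'I_n -> 'I_b -> 'I_b -> bool
}.

Definition is_el_subgraph (n b : nat) (G : elgraph n b) : Prop :=
  (forall c1 c2, eset G c1 c2 ->
     [/\ c1 \in vset G, c2 \in vset G & @hs_edge n b c1 c2]) /\
  (forall c1 c2, eset G c1 c2 -> exists d1 d2, lab G c1 c2 d1 d2) /\
  (forall c1 c2 d1 d2, lab G c1 c2 d1 d2 ->
     eset G c1 c2 /\ @hs_label n b c1 c2 d1 d2).

Definition strongly_connected (n b : nat) (G : elgraph n b) : Prop :=
  forall u v, u \in vset G -> v \in vset G -> connect (eset G) u v.

Definition reflection (n b : nat) (G : elgraph n b) : elgraph n b :=
  ELGraph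
    [set rev_ord c | c in vset G]
    (fun x y => [exists c1, exists c2,
        [&& eset G c1 c2, x == rev_ord c1 & y == rev_ord c2]])
    (fun x y e1 e2 => [exists c1, exists c2, exists d1, exists d2,
        [&& lab G c1 c2 d1 d2, x == rev_ord c1, y == rev_ord c2,
            e1 == rev_ord d1 & e2 == rev_ord d2]]).

(* Main.v *)
Require Import Defs.
From mathcomp Require Import all_boot all_order all_algebra zify.
Lemma labrev n b (Hn : (0 < n)%N) (Hnb : (n < b)%N) (c1 c2 : 'I_n) (d1 d2 : 'I_b) :
  hs_label c1 c2 d1 d2 -> hs_label (rev_ord c1) (rev_ord c2) (rev_ord d1) (rev_ord d2).
Proof.
rewrite /hs_label /mother_edge /= => /andP [_ /eqP H].
have h1 := ltn_ord c1; have h2 := ltn_ord c2; have h3 := ltn_ord d1; have h4 := ltn_ord d2.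
have E : (n * d2 + c1 = b * c2 + d1)%N by lia.
move: {H} E; set D1 := (b - d1.+1)%N; set D2 := (b - d2.+1)%N; set C1 := (n - c1.+1)%N;
  set C2 := (n - c2.+1)%N => E.
have e1 : (D1 + d1 = b - 1)%N by lia.
have e2 : (D2 + d2 = b - 1)%N by lia.
have e3 : (C1 + c1 = n - 1)%N by lia.
have e4 : (C2 + c2 = n - 1)%N by lia.
have p1 : (n * D2 + n * d2 = n * (b - 1))%N by rewrite -mulnDr e2.
have p2 : (b * C2 + b * c2 = b * (n - 1))%N by rewrite -mulnDr e4.
have p3 : (n * (b - 1) = n * b - n)%N by rewrite mulnBr muln1.
have p4 : (b * (n - 1) = n * b - b)%N by rewrite mulnBr muln1 mulnC.
have p5 : (n <= n * b)%N by rewrite leq_pmulr; lia.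
have p6 : (b <= n * b)%N by rewrite leq_pmull; lia.
have E' : (n * D2 + C1 = b * C2 + D1)%N by lia.
apply/andP; split; last by apply/eqP; lia.
have q1 : ((b - n) * D2 + n * D2 = b * D2)%N by rewrite -mulnDl subnK // ltnW.
have c2D2 : (C2 <= D2)%N.
  case: (leqP C2 D2) => // lt.
  have : (b * D2.+1 <= b * C2)%N by rewrite leq_mul2l lt orbT.
  have : (n * D2 <= b * D2)%N by rewrite leq_mul2r ltnW ?orbT.
  rewrite mulnS; move: E'; generalize (n * D2)%N (b * D2)%N (b * C2)%N; lia.
have q2 : (b * (D2 - C2) + b * C2 = b * D2)%N by rewrite -mulnDr subnK.
have HD : (D1 + (b - n) * D2 = b * (D2 - C2) + C1)%N.
  move: q1 q2 E'; generalize ((b - n) * D2)%N (n * D2)%N (b * (D2 - C2))%N (b * C2)%N (b * D2)%N.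
  lia.
rewrite HD mulnC modnMDl modn_small; lia.
Qed.

Theorem corollary14 (n b : nat) (Hn : (1 < n)%N) (Hnb : (n < b)%N)
  (G0 : elgraph n b) :
  is_el_subgraph G0 -> strongly_connected G0 ->
  is_el_subgraph (reflection G0) /\ strongly_connected (reflection G0).
Proof.
have Hn0 : (0 < n)%N by apply: ltnW.
move=> [S1 [S2 S3]] SC; split; [split; [|split]|].
- move=> x y /existsP [c1 /existsP [c2 /and3P [e /eqP -> /eqP ->]]].
  have [v1 v2 /existsP [d1 /existsP [d2 L]]] := S1 _ _ e.
  split; try by apply: imset_f.
  by apply/existsP; exists (rev_ord d1); apply/existsP; exists (rev_ord d2); apply: labrev.
- move=> x y /existsP [c1 /existsP [c2 /and3P [e /eqP -> /eqP ->]]].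
  have [d1 [d2 L]] := S2 _ _ e.
  exists (rev_ord d1), (rev_ord d2).
  apply/existsP; exists c1; apply/existsP; exists c2; apply/existsP; exists d1;
  apply/existsP; exists d2; by rewrite L !eqxx.
- move=> x y e1 e2 /existsP [c1 /existsP [c2 /existsP [d1 /existsP [d2
    /and5P [L /eqP -> /eqP -> /eqP -> /eqP ->]]]]].
  have [e Hl] := S3 _ _ _ _ L.
  split; last by apply: labrev.
  by apply/existsP; exists c1; apply/existsP; exists c2; rewrite e !eqxx.
- move=> u v /imsetP [c Hc ->] /imsetP [c' Hc' ->].
  have := SC _ _ Hc Hc'.
  move/connectP => [p Hp ->]; elim: p c Hp {Hc} => [|x p IH] c //= /andP [e Hp].
  apply: connect_trans (IH _ Hp).
  apply: connect1; apply/existsP; exists c; apply/existsP; exists x; by rewrite e !eqxx.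
Qed.
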